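(* Let $\langle c^m,c^M\rangle$ be a cell of size $n$. Let $c$ be any $(n-1)$-tuple such that $c_i\in\{c^m_i,c^M_i\}$ for every $i\in[n-1]$. Then $c$ is a cubic coordinate.
   Context: A Tamari diagram of size $n$ is a word $u=u_1\cdots u_n$ of integers with $0\leq u_i\leq n-i$ and $u_{i+j}\leq u_i-j$ for all $i\in[n]$, $0\leq j\leq u_i$. A dual Tamari diagram of size $n$ is a word $v$ of integers with $0\leq v_i\leq i-1$ and $v_{i-j}\leq v_i-j$ for all $i\in[n]$, $0\leq j\leq v_i$. $(u,v)$ is a Tamari interval diagram if moreover for all $1\leq i<j\leq n$ with $j-i\leq u_i$ one has $v_j<j-i$. A cubic coordinate of size $n$ is $c\in\mathbb{Z}^{n-1}$ such that $(u,v)$ with $u_i=\max(c_i,0)$ ($i\in[n-1]$), $u_n=0$, $v_1=0$, $v_i=|\min(c_{i-1},0)|$ ($2\leq i\leq n$) is a Tamari interval diagram. For a cubic coordinate $c$ and $i\in[n-1]$, the minimal increase $\uparrow_i(c)$ is defined when there exists a cubic coordinate agreeing with $c$ outside position $i$ and with $i$-th entry $>c_i$; then $\uparrow_i(c)$ is obtained from $c$ by replacing $c_i$ by the smallest integer $t>c_i$ such that the result is a cubic coordinate. $c$ is minimal-cellular if $\uparrow_i(c)$ is defined for all $i\in[n-1]$. A cell of size $n$ is a pair $\langle c^m,c^M\rangle$ where $c^m$ is a minimal-cellular cubic coordinate of size $n$ and $c^M=\uparrow_1(\uparrow_2(\cdots(\uparrow_{n-1}(c^m))\cdots))$ (every step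 of this composition is defined). *)

(* Defs.v *)
(* Indices are 1-based as in the paper: c_i := nth 0 c (i-1). *)
From mathcomp Require Import all_boot all_order all_algebra.
Set Implicit Arguments. Unset Strict Implicit. Unset Printing Implicit Defensive.
Import Order.TTheory GRing.Theory Num.Theory.

Definition tamari_diagram (n : nat) (u : nat -> nat) : Prop :=
  forall i, 1 <= i <= n ->
    u i <= n - i /\ (forall j, j <= u i -> u (i + j) <= u i - j).

Definition dual_tamari_diagram (n : nat) (v : nat -> nat) : Prop :=
  forall i, 1 <= i <= n ->
    v i <= i - 1 /\ (forall j, j <= v i -> v (i - j) <= v i - j).

Definition tamari_interval_diagram (n : nat) (u v : nat -> nat) : Prop :=
  tamari_diagram n u /\ dual_tamari_diagram n v /\
  (forall i j, 1 <= i -> i < j -> j <= n -> j - i <= u i -> v j < j - i).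

Definition cube_coord (c : seq int) (i : nat) : int := nth 0%R c i.-1.

Definition u_of (n : nat) (c : seq int) (i : nat) : nat :=
  if (1 <= i) && (i < n) then
    (match cube_coord c i with Posz k => k | Negz _ => 0 end)
  else 0.

(* v_1 = 0, v_i = |min(c_{i-1}, 0)| for 2 <= i <= n *)
Definition v_of (n : nat) (c : seq int) (i : nat) : nat :=
  if (2 <= i) && (i <= n) then
    (match cube_coord c i.-1 with Posz _ => 0 | Negz k => k.+1 end)
  else 0.

Definition cubic_coordinate (n : nat) (c : seq int) : Prop :=
  size c = n.-1 /\ tamari_interval_diagram n (u_of n c) (v_of n c).

Definition set_coord (c : seq int) (i : nat) (t : int) : seq int :=
  set_nth 0%R c i.-1 t.

Definition up_defined (n : nat) (c : seq int) (i : nat) : Prop :=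
  exists c', cubic_coordinate n c' /\
    (forall k, 1 <= k <= n.-1 -> k != i -> cube_coord c' k = cube_coord c k) /\ (cube_coord c i < cube_coord c' i)%R.

Definition is_up (n : nat) (c : seq int) (i : nat) (d : seq int) : Prop :=
  up_defined n c i /\
  exists t : int, (cube_coord c i < t)%R /\ cubic_coordinate n (set_coord c i t) /\
    (forall t' : int, (cube_coord c i < t')%R -> (t' < t)%R ->
        ~ cubic_coordinate n (set_coord c i t')) /\
    d = set_coord c i t.

Definition minimal_cellular (n : nat) (c : seq int) : Prop :=
  cubic_coordinate n c /\ forall i, 1 <= i <= n.-1 -> up_defined n c i.

(* ups n k c d  <->  d = up_1(up_2(...(up_k(c))...)) with every step defined *)
Fixpoint ups (n k : nat) (c d : seq int) : Prop :=
  match k with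
  | 0 => d = c
  | k'.+1 => exists e, is_up n c k e /\ ups n k' e d
  end.

Definition cell (n : nat) (cm cM : seq int) : Prop :=
  minimal_cellular n cm /\ ups n n.-1 cm cM.

(* Main.v *)
Require Import Defs.
From mathcomp Require Import all_boot all_order all_algebra.
From mathcomp Require Import zify.
From Stdlib Require Import Classical.
Import Order.TTheory GRing.Theory Num.Theory.

Set Implicit Arguments.
Unset Strict Implicit.
Local Open Scope ring_scope.

Definition Pr (d : nat) (x y : int) : Prop :=
  ((d%:Z <= x) -> y <= x - d%:Z) /\ ((y <= - d%:Z) -> y + d%:Z <= x) /\
  ((d%:Z + 1 <= x) -> - d%:Z <= y).

Definition Good (n : nat) (f : nat -> int) : Prop :=
  (forall i, (1 <= i <= n.-1)%N -> - (i%:Z) <= f i /\ f i <= (n - i)%N%:Z) /\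
  (forall a b, (1 <= a)%N -> (a < b)%N -> (b <= n.-1)%N -> Pr (b - a) (f a) (f b)).

Lemma u_spec n c i : (1 <= i < n)%N ->
  (0 <= cube_coord c i /\ (u_of n c i)%:Z = cube_coord c i) \/
  (cube_coord c i < 0 /\ u_of n c i = 0%N).
Proof.
move=> H; rewrite /u_of H.
case: (cube_coord c i) => k; first by left.
by right.
Qed.

Lemma u_out n c i : ~~ (1 <= i < n)%N -> u_of n c i = 0%N.
Proof. by move=> H; rewrite /u_of (negbTE H). Qed.

Lemma v_spec n c i : (1 <= i)%N -> (i < n)%N ->
  (0 <= cube_coord c i /\ v_of n c i.+1 = 0%N) \/
  (cube_coord c i < 0 /\ (v_of n c i.+1)%:Z = - cube_coord c i).
Proof.
move=> H1 H2; rewrite /v_of /=.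
have -> : (2 <= i.+1 <= n)%N by apply/andP; split.
case: (cube_coord c i) => k; first by left.
by right; rewrite NegzE opprK.
Qed.

Lemma v_out n c i : ~~ (2 <= i <= n)%N -> v_of n c i = 0%N.
Proof. by move=> H; rewrite /v_of (negbTE H). Qed.

Lemma cubicP n c : size c = n.-1 ->
  cubic_coordinate n c <-> Good n (cube_coord c).
Proof.
move=> Hs; split.
- case=> _ [Ht [Hd Hi]]; split.
  + move=> i /andP [H1 H2].
    have [Hu _] := Ht i ltac:(lia).
    have [Hv _] := Hd i.+1 ltac:(lia).
    have := @u_spec n c i ltac:(lia).
    have := @v_spec n c i ltac:(lia) ltac:(lia).
    lia.
  + move=> a b Ha Hab Hb; split; [|split].
    * move=> Hx.
      have := @u_spec n c a ltac:(lia).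
      case=> [[Hpa Hua]|]; last lia.
      have [_ Ht2] := Ht a ltac:(lia).
      have := Ht2 (b - a)%N ltac:(lia).
      have -> : (a + (b - a) = b)%N by lia.
      have := @u_spec n c b ltac:(lia).
      lia.
    * move=> Hy.
      have := @v_spec n c b ltac:(lia) ltac:(lia).
      case=> [[Hpb Hvb]|[Hnb Hvb]]; first lia.
      have [_ Hd2] := Hd b.+1 ltac:(lia).
      have := Hd2 (b - a)%N ltac:(lia).
      have -> : (b.+1 - (b - a) = a.+1)%N by lia.
      have := @v_spec n c a ltac:(lia) ltac:(lia).
      lia.
    * move=> Hx.
      have := @u_spec n c a ltac:(lia).
      case=> [[Hpa Hua]|]; last lia.
      have := Hi a b.+1 ltac:(lia) ltac:(lia) ltac:(lia) ltac:(lia).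
      have := @v_spec n c b ltac:(lia) ltac:(lia).
      lia.
- case=> Hun Hpr; split; first by [].
  split; [|split].
  + move=> i Hi; split.
    * case: (boolP (1 <= i < n)%N) => H.
      - have := Hun i ltac:(lia).
        have := @u_spec n c _ H. lia.
      - by rewrite u_out.
    * move=> j Hj.
      case: (boolP (j == 0%N)) => Hj0.
      - rewrite (eqP Hj0) addn0 subn0; lia.
      case: (boolP (1 <= i < n)%N) => H; last by move: Hj; rewrite u_out //; lia.
      have := @u_spec n c _ H.
      case=> [[Hpa Hua]|[_ Hu0]]; last by move: Hj; rewrite Hu0; lia.
      case: (boolP (1 <= i + j < n)%N) => H2; last by rewrite u_out.
      have := Hpr i (i + j)%N ltac:(lia) ltac:(lia) ltac:(lia).
      have -> : (i + j - i = j)%N by lia.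
      have := @u_spec n c _ H2.
      rewrite /Pr; lia.
  + move=> i Hi; split.
    * case: i Hi => [|i] Hi; first by rewrite v_out.
      case: (boolP (1 <= i)%N) => H1; last by rewrite v_out //; lia.
      have := @v_spec n c _ H1 ltac:(lia).
      have := Hun i ltac:(lia).
      lia.
    * move=> j Hj.
      case: (boolP (j == 0%N)) => Hj0.
      - rewrite (eqP Hj0) subn0; lia.
      case: (boolP (2 <= i <= n)%N) => H; last by move: Hj; rewrite v_out //; lia.
      case: i Hi Hj H => [|i] Hi Hj H; first by [].
      have := @v_spec n c i ltac:(lia) ltac:(lia).
      case=> [[_ Hv0]|[Hneg Hv]]; first by move: Hj; rewrite Hv0; lia.
      case: (boolP (2 <= i.+1 - j)%N) => H2; last by rewrite v_out //; lia.
      have -> : (i.+1 - j = (i - j).+1)%N by lia.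
      have := @v_spec n c (i - j)%N ltac:(lia) ltac:(lia).
      have := Hpr (i - j)%N i ltac:(lia) ltac:(lia) ltac:(lia).
      have -> : (i - (i - j) = j)%N by lia.
      rewrite /Pr; lia.
  + move=> i j Hi Hij Hj Hu.
    case: (boolP (1 <= i < n)%N) => H; last by move: Hu; rewrite u_out //; lia.
    have := @u_spec n c _ H.
    case=> [[Hpa Hua]|[_ Hu0]]; last by move: Hu; rewrite Hu0; lia.
    case: j Hij Hj Hu => [|j] Hij Hj Hu; first by [].
    have := @v_spec n c j ltac:(lia) ltac:(lia).
    case=> [[_ Hv0]|[Hneg Hv]]; first by rewrite Hv0; lia.
    case: (boolP (j == i)) => Hji; first by move: Hneg; rewrite (eqP Hji); lia.
    have := Hpr i j ltac:(lia) ltac:(lia) ltac:(lia).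
    rewrite /Pr; lia.
Qed.

Lemma coord_set c i t p : (1 <= i)%N -> (1 <= p)%N ->
  cube_coord (set_coord c i t) p = if p == i then t else cube_coord c p.
Proof.
move=> Hi Hp; rewrite /cube_coord /set_coord nth_set_nth /=.
have -> : (p.-1 == i.-1) = (p == i).
  by case: p i Hi Hp => [|p] [|i].
by [].
Qed.

Lemma size_set c i t : (1 <= i <= size c)%N -> size (set_coord c i t) = size c.
Proof. move=> H; rewrite /set_coord size_set_nth; lia. Qed.

Lemma ups_chain n k c d : ups n k c d -> exists D : nat -> seq int,
  D k = c /\ D 0%N = d /\ forall j, (j < k)%N -> is_up n (D j.+1) j.+1 (D j).
Proof.
elim: k c => [|k IH] c /=.
  by move=> ->; exists (fun _ => c).
case=> e [Hup /IH [D' [H1 [H2 H3]]]].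
exists (fun j => if j == k.+1 then c else D' j); split; first by rewrite eqxx.
split; first by [].
move=> j Hj; rewrite eqSS.
have [->|Hjk] := eqVneq j k.
  rewrite ifN; last lia.
  by rewrite H1.
rewrite (_ : (j == k.+1) = false); last lia.
apply: H3; lia.
Qed.

Lemma Good_ext n f g : Good n f -> (forall p, (1 <= p <= n.-1)%N -> f p = g p) -> Good n g.
Proof.
move=> [Hu Hp] E; split.
  by move=> i Hi; rewrite -E //; apply: Hu.
by move=> a b Ha Hab Hb; rewrite -!E; [apply: Hp| lia| lia].
Qed.

Lemma Good_set n f i t : Good n f -> (1 <= i <= n.-1)%N ->
  - (i%:Z) <= t -> t <= (n - i)%N%:Z ->
  (forall p, (1 <= p)%N -> (p < i)%N -> Pr (i - p) (f p) t) ->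
  (forall q, (i < q)%N -> (q <= n.-1)%N -> Pr (q - i) t (f q)) ->
  Good n (fun p => if p == i then t else f p).
Proof.
move=> [Hu Hp] Hi H1 H2 Hl Hr; split.
  move=> j Hj; case: (boolP (j == i)) => E; last exact: Hu.
  by rewrite (eqP E).
move=> a b Ha Hab Hb.
case: (boolP (a == i)) => Ea; case: (boolP (b == i)) => Eb.
- lia.
- rewrite (eqP Ea) in Hab *; apply: Hr => //.
- rewrite (eqP Eb) in Hab *; apply: Hl => //.
- exact: Hp.
Qed.

Lemma main_aux (n : nat) (cm cM c : seq int) :
  cell n cm cM ->
  size c = n.-1 ->
  (forall i, (1 <= i <= n.-1)%N -> cube_coord c i = cube_coord cm i \/ cube_coord c i = cube_coord cM i) ->
  cubic_coordinate n c.
Proof.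
move=> [[Hcm Hdef] Hups] Hsc Hmix.
have [D [HDk [HD0 HDup]]] := ups_chain Hups.
have Dcub : forall j, (j <= n.-1)%N -> cubic_coordinate n (D j).
  move=> j Hj; case: (ltnP j n.-1) => H.
    by have [_ [t [_ [Hc [_ ->]]]]] := HDup j H.
  have -> : j = n.-1 by lia.
  by rewrite HDk.
have DGood : forall j, (j <= n.-1)%N -> Good n (cube_coord (D j)).
  move=> j Hj; have Hc := Dcub j Hj; have [Hs _] := Hc; exact: (cubicP Hs).1 Hc.
have Dm : forall m, (m <= n.-1)%N -> forall p, (1 <= p <= n.-1 - m)%N ->
    cube_coord (D (n.-1 - m)%N) p = cube_coord cm p.
  elim=> [|m IH] Hm p Hp; first by rewrite subn0 HDk.
  have := HDup (n.-1 - m.+1)%N ltac:(lia).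
  have -> : ((n.-1 - m.+1).+1 = n.-1 - m)%N by lia.
  move=> [_ [t [_ [_ [_ ->]]]]].
  rewrite coord_set; [|lia|lia].
  rewrite ifN; [apply: IH; lia| lia].
have DmG : forall j p, (j <= n.-1)%N -> (1 <= p <= j)%N -> cube_coord (D j) p = cube_coord cm p.
  move=> j p Hj Hp; have := Dm (n.-1 - j)%N ltac:(lia) p ltac:(lia).
  by have -> : (n.-1 - (n.-1 - j) = j)%N by lia.
have DM : forall j p, (j < p)%N -> (p <= n.-1)%N -> cube_coord (D j) p = cube_coord cM p.
  elim=> [|j IH] p Hjp Hp; first by rewrite HD0.
  have := HDup j ltac:(lia); move=> [_ [t [_ [_ [_ HDj]]]]].
  rewrite -IH; [|lia|lia].
  rewrite HDj coord_set; [|lia|lia].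
  rewrite ifN //; lia.
have Hup : forall i, (1 <= i <= n.-1)%N ->
   cube_coord cm i < cube_coord cM i /\
   (forall t', cube_coord cm i < t' -> t' < cube_coord cM i ->
      ~ Good n (fun p => if p == i then t' else cube_coord (D i) p)).
  move=> i Hi; case: i Hi => [|j] Hi; first lia.
  have := HDup j ltac:(lia); move=> [_ [t [Hlt [Hc [Hmin HDj]]]]].
  have E1 : cube_coord (D j.+1) j.+1 = cube_coord cm j.+1 by apply: DmG; lia.
  have E2 : cube_coord cM j.+1 = t.
    have E : cube_coord (D j) j.+1 = cube_coord cM j.+1 by apply: DM; lia.
    by rewrite -E HDj coord_set // eqxx.
  rewrite -E1 E2; split; first done.
  move=> t' H1 H2 HG; apply: (Hmin t' H1 H2).
  have Hs : size (D j.+1) = n.-1 by case: (Dcub j.+1 ltac:(lia)).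
  have Hs' : size (set_coord (D j.+1) j.+1 t') = n.-1.
    rewrite size_set; [exact: Hs | rewrite Hs; lia].
  apply/(cubicP Hs'); apply: Good_ext HG _.
  move=> p Hp; rewrite coord_set //; lia.
have [Hs0 _] := Hcm.
have Mgood := (cubicP Hs0).1 Hcm.
have Hc0 := Dcub 0%N (leq0n _); rewrite HD0 in Hc0.
have [HsM _] := Hc0.
have MMgood := (cubicP HsM).1 Hc0.
have Hdef' : forall i, (1 <= i <= n.-1)%N -> exists g, Good n g /\
    (forall p, (1 <= p <= n.-1)%N -> p != i -> g p = cube_coord cm p) /\ cube_coord cm i < g i.
  move=> i Hi; have [c' [Hc' [Heq Hlt]]] := Hdef i Hi.
  exists (cube_coord c'); split; last by split.
  have [Hs _] := Hc'; exact: (cubicP Hs).1 Hc'.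
have Zero : forall b, (1 <= b <= n.-1)%N -> cube_coord cm b < 0 -> cube_coord cM b <= 0.
  move=> b Hb Hneg; have [Hlt Hmin] := Hup b Hb.
  case: (lerP (cube_coord cM b) 0) => // Hpos; exfalso.
  apply: (Hmin 0 Hneg Hpos).
  apply: Good_set; [apply: DGood; lia | lia | lia | lia | |].
  - move=> p Hp Hpb; rewrite /Pr; lia.
  - move=> q Hq Hqn; rewrite /Pr; lia.
have NB : forall d a b, (b - a)%N = d -> (1 <= a)%N -> (a < b)%N -> (b <= n.-1)%N ->
    ~ ((d%:Z < cube_coord cM a) /\ (cube_coord cm b < - d%:Z)).
  move=> d; elim/ltn_ind: d => d IH a b Hd Ha Hab Hb [Hx Hy].
  have [g [Hg [Hgeq Hglt]]] := Hdef' a ltac:(lia).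
  have Hgb : g b = cube_coord cm b by apply: Hgeq; lia.
  have Pab := Hg.2 a b Ha Hab Hb; rewrite Hgb Hd in Pab.
  have Hxa : cube_coord cm a < d%:Z by move: Pab; rewrite /Pr; lia.
  have [Hlta Hmina] := Hup a ltac:(lia).
  apply: (Hmina d%:Z Hxa Hx).
  have HMa := MMgood.1 a ltac:(lia).
  apply: Good_set; [apply: DGood; lia | lia | lia | lia | |].
  - move=> p Hp Hpa.
    have E0 : cube_coord (D a) p = cube_coord cm p by apply: DmG; lia.
    have E1 : cube_coord (D a.-1) p = cube_coord cm p by apply: DmG; lia.
    have E2 : cube_coord (D a.-1) a = cube_coord cM a by apply: DM; lia.
    have P1 := Mgood.2 p a Hp Hpa ltac:(lia).
    have P2 := (DGood a.-1 ltac:(lia)).2 p a Hp Hpa ltac:(lia).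
    rewrite E1 E2 in P2; rewrite E0.
    move: P1 P2; rewrite /Pr; lia.
  - move=> q Hq Hqn.
    have E : cube_coord (D a) q = cube_coord cM q by apply: DM; lia.
    rewrite E.
    have P1 := MMgood.2 a q Ha Hq Hqn.
    case: (ltngtP q b) => Hqb.
    + have Hc : cube_coord cM q <= (b - q)%N%:Z.
        case: (lerP (cube_coord cM q) (b - q)%N%:Z) => // Hc; exfalso.
        apply: (IH (b - q)%N _ q b erefl _ Hqb Hb); [lia|lia|].
        split=> //; lia.
      move: P1; rewrite /Pr; lia.
    + move: P1; rewrite /Pr; lia.
    + have Z := Zero b ltac:(lia) ltac:(lia).
      subst q; move: P1; rewrite /Pr; lia.
apply/(cubicP Hsc); split.
  move=> i Hi; case: (Hmix i Hi) => ->; [exact: Mgood.1 | exact: MMgood.1].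
move=> a b Ha Hab Hb.
have Pm := Mgood.2 a b Ha Hab Hb.
have PM := MMgood.2 a b Ha Hab Hb.
have Pmix : Pr (b - a) (cube_coord cm a) (cube_coord cM b).
  have E0 : cube_coord (D a) a = cube_coord cm a by apply: DmG; lia.
  have E1 : cube_coord (D a) b = cube_coord cM b by apply: DM; lia.
  have := (DGood a ltac:(lia)).2 a b Ha Hab Hb.
  by rewrite E0 E1.
have [Hla _] := Hup a ltac:(lia).
have [Hlb _] := Hup b ltac:(lia).
have Hnb := NB (b - a)%N a b erefl Ha Hab Hb.
case: (Hmix a ltac:(lia)) => ->; case: (Hmix b ltac:(lia)) => ->; try done.
move: Pm PM; rewrite /Pr; lia.
Qed.

Local Close Scope ring_scope.

Theorem theorem4p7 (n : nat) (cm cM c : seq int) :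
  cell n cm cM ->
  size c = n.-1 ->
  (forall i, 1 <= i <= n.-1 -> cube_coord c i = cube_coord cm i \/ cube_coord c i = cube_coord cM i) ->
  cubic_coordinate n c.
Proof. exact: main_aux. Qed.
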